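(* Let $1\le k\le n-1$ and let $\Sigma=\mathbb{S}^k\times\mathbb{R}^{n-k}\subset\mathbb{R}^{n+1}$ be a self-shrinker, with Euclidean coordinates $\vec x=(x_{k+1},\dots,x_n)$ on the $\mathbb{R}^{n-k}$ factor (and $x_n$ any one of these linear coordinates). Then the following subsets of $\Sigma$ are stable: (1) $\{x_n>\sqrt2\}$; (2) $\{|x_n|<\sqrt2\}$; (3) $\{x_n<-\sqrt2\}$; (4) $\{|\vec x|>\sqrt{2(n-k)}\}$; (5) $\{|\vec x|<\sqrt{2(n-k)}\}$.
   Context: $\mathbb{S}^k$ is the round sphere of radius $\sqrt{2k}$ centered at the origin of $\mathbb{R}^{k+1}$. Stability operator: $Lf=\Delta f-\tfrac12\langle\vec x,\nabla f\rangle+(|A|^2+\tfrac12)f$. A region $\Omega$ is stable if there is a function $u$ with $Lu=0$ and $u>0$ on $\Omega$. *)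

(* Defs.v *)
From Stdlib Require Import Reals.
Open Scope R_scope.

(* Points of R^(N+1) are represented as functions nat -> R; only the
   coordinates 0..N are meaningful. *)
Definition vec := nat -> R.

Fixpoint ssum (m : nat) (f : nat -> R) : R :=
  match m with
  | O => 0
  | S m' => ssum m' f + f m'
  end.

Definition sumrange (a b : nat) (f : nat -> R) : R :=
  ssum (b - a) (fun i => f (a + i)%nat).

Definition shift (p : vec) (i : nat) (t : R) : vec :=
  fun m => if Nat.eqb m i then p m + t else p m.

Definition near (N : nat) (p : vec) (del : R) (q : vec) : Prop :=
  (forall i, (N < i)%nat -> q i = p i) /\
  ssum (S N) (fun i => (q i - p i) ^ 2) < del ^ 2.

Definition cont_at (N : nat) (f : vec -> R) (p : vec) : Prop :=
  forall eps, 0 < eps -> exists del, 0 < del /\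
    forall q, near N p del q -> Rabs (f q - f p) < eps.

(* The self-shrinker Sigma = S^k x R^(n-k) in R^(n+1):
   coordinates x_0..x_k on the R^(k+1) factor, where S^k is the round sphere
   of radius sqrt(2k); coordinates x_(k+1)..x_n on the R^(n-k) factor. *)
Definition radius (k : nat) : R := sqrt (2 * INR k).

Definition Sigma (k n : nat) (p : vec) : Prop :=
  ssum (S k) (fun i => p i ^ 2) = radius k ^ 2 /\
  (forall i, (n < i)%nat -> p i = 0).

(* C^2 data of an ambient function U near a point q of R^(n+1):
   g i = d_i U, h i j = d_j (d_i U), second partials continuous. *)
Definition C2_at (N : nat) (U : vec -> R) (g : nat -> vec -> R)
  (h : nat -> nat -> vec -> R) (q : vec) : Prop :=
  (forall i, (i <= N)%nat ->
     derivable_pt_lim (fun t => U (shift q i t)) 0 (g i q)) /\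
  (forall i j, (i <= N)%nat -> (j <= N)%nat ->
     derivable_pt_lim (fun t => g i (shift q j t)) 0 (h i j q)) /\
  (forall i j, (i <= N)%nat -> (j <= N)%nat -> cont_at N (h i j) q).

(* Stability operator L u = Delta u - 1/2 <x, grad u> + (|A|^2 + 1/2) u on Sigma,
   where u is the restriction to Sigma of an ambient C^2 function U with
   partials g, h.  Formulas used (standard for a hypersurface with unit
   normal nu and mean curvature H = div nu):
     Delta_Sigma u = Delta_{R^(n+1)} U - Hess U (nu,nu) - H <grad U, nu>,
     grad_Sigma u  = grad U - <grad U, nu> nu,
   with nu = (x_0..x_k,0..0)/sqrt(2k) the outward normal of the cylinder,
   H = k / sqrt(2k), and |A|^2 = k / (sqrt(2k))^2 (principal curvatures
   1/sqrt(2k) with multiplicity k, and 0). *)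
Definition nu (k : nat) (p : vec) (i : nat) : R := p i / radius k.

Definition meanH (k : nat) : R := INR k / radius k.

Definition normA2 (k : nat) : R := INR k / (radius k ^ 2).

Definition lap_Sigma (k n : nat) (g : nat -> vec -> R)
  (h : nat -> nat -> vec -> R) (p : vec) : R :=
  ssum (S n) (fun i => h i i p)
  - ssum (S k) (fun i => ssum (S k) (fun j => nu k p i * nu k p j * h i j p))
  - meanH k * ssum (S k) (fun i => nu k p i * g i p).

Definition drift_Sigma (k n : nat) (g : nat -> vec -> R) (p : vec) : R :=
  ssum (S n) (fun i => p i * g i p)
  - ssum (S k) (fun i => p i * nu k p i) * ssum (S k) (fun i => nu k p i * g i p).

Definition Lop (k n : nat) (U : vec -> R) (g : nat -> vec -> R)
  (h : nat -> nat -> vec -> R) (p : vec) : R :=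
  lap_Sigma k n g h p - / 2 * drift_Sigma k n g p + (normA2 k + / 2) * U p.

(* A region Omega (a subset of Sigma) is stable if there is a C^2 function u
   on Omega (given as the restriction of an ambient function that is C^2 on a
   neighbourhood of each point of Omega) with L u = 0 and u > 0 on Omega. *)
Definition stable (k n : nat) (Omega : vec -> Prop) : Prop :=
  exists (U : vec -> R) (g : nat -> vec -> R) (h : nat -> nat -> vec -> R),
    forall p, Omega p ->
      (exists del, 0 < del /\ forall q, near n p del q -> C2_at n U g h q) /\
      Lop k n U g h p = 0 /\ 0 < U p.

Definition ynorm2 (k n : nat) (p : vec) : R :=
  sumrange (S k) (S n) (fun i => p i ^ 2).

(* Main.v *)
Require Import Defs.
From Stdlib Require Import Reals Lra Lia FunctionalExtensionality.
From Coquelicot Require Import Coquelicot.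
Open Scope R_scope.

Lemma ssum_ext m f g : (forall i, (i < m)%nat -> f i = g i) -> ssum m f = ssum m g.
Proof. induction m; simpl; intros H; auto. rewrite IHm by (intros; apply H; lia). rewrite H by lia; auto. Qed.

Lemma ssum_zero m f : (forall i, (i < m)%nat -> f i = 0) -> ssum m f = 0.
Proof. intros H. rewrite (ssum_ext m f (fun _ => 0)) by auto. induction m; simpl; auto. rewrite IHm by (intros; apply H; lia). lra. Qed.

Lemma ssum_scal m c f : ssum m (fun i => c * f i) = c * ssum m f.
Proof. induction m; simpl; [lra|]. rewrite IHm; lra. Qed.

Lemma ssum_shift m i t (F : nat -> R -> R) q :
  ssum m (fun l => F l (shift q i t l)) =
  ssum m (fun l => F l (q l)) + (if Nat.ltb i m then F i (q i + t) - F i (q i) else 0).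
Proof.
  induction m; simpl; [lra|]. rewrite IHm. unfold shift.
  destruct (Nat.eqb m i) eqn:E.
  - apply Nat.eqb_eq in E; subst. replace (Nat.ltb i i) with false by (symmetry; apply Nat.ltb_irrefl).
    replace (Nat.ltb i (S i)) with true by (symmetry; apply Nat.ltb_lt; lia). lra.
  - apply Nat.eqb_neq in E. destruct (Nat.ltb_spec i m); destruct (Nat.ltb_spec i (S m)); try lia; lra.
Qed.

Lemma ssum_add a b f : ssum (a + b) f = ssum a f + ssum b (fun i => f (a + i)%nat).
Proof. induction b. rewrite Nat.add_0_r; simpl; lra. rewrite Nat.add_succ_r. change (ssum (S (a+b)) f) with (ssum (a+b) f + f (a+b)%nat). change (ssum (S b) (fun i => f (a + i)%nat)) with (ssum b (fun i => f (a + i)%nat) + f (a+b)%nat). rewrite IHb; lra. Qed.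

Definition Qf (w : nat -> R) n (p : vec) := ssum (S n) (fun i => w i * p i ^ 2).

Lemma normA2_half k : (1 <= k)%nat -> normA2 k = / 2.
Proof.
  intros H. unfold normA2, radius. rewrite pow2_sqrt.
  - assert (0 < INR k) by (apply lt_0_INR; lia). field. lra.
  - assert (0 <= INR k) by apply pos_INR. lra.
Qed.

Lemma generic k n (w : nat -> R) (s : R) (Om : vec -> Prop) :
  (1 <= k)%nat -> (forall i, (i <= k)%nat -> w i = 0) ->
  (forall p, Om p -> 0 < s * (Qf w n p - 2 * ssum (S n) w)) ->
  stable k n Om.
Proof.
  intros Hk Hw Hpos.
  set (M := ssum (S n) w).
  exists (fun p => s * (Qf w n p - 2 * M)),
         (fun i q => s * (w i * (2 * q i))),
         (fun i i' q => if Nat.eqb i i' then s * (w i * 2) else 0).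
  intros p Hp. split; [|split; [|apply Hpos; auto]].
  - exists 1. split; [lra|]. intros q _. split; [|split].
    + intros i Hi. apply is_derive_Reals.
      assert (E : (fun t => s * (Qf w n (shift q i t) - 2 * M)) =
        fun t => s * (Qf w n q + (w i * ((q i + t)^2 - q i ^2)) - 2 * M)).
      { apply functional_extensionality; intro t. unfold Qf.
        rewrite (ssum_shift (S n) i t (fun l x => w l * x ^ 2)).
        replace (Nat.ltb i (S n)) with true by (symmetry; apply Nat.ltb_lt; lia). f_equal. lra. }
      rewrite E. auto_derive; auto. lra.
    + intros i i' Hi Hi'. apply is_derive_Reals. unfold shift.
      destruct (Nat.eqb i i') eqn:E.
      * auto_derive; auto; try lra.
      * auto_derive; auto; try lra.
    + intros i i' _ _ eps He. exists 1. split; [lra|]. intros. rewrite Rminus_diag, Rabs_R0. auto.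
  - unfold Lop, lap_Sigma, drift_Sigma. rewrite normA2_half by auto.
    rewrite (ssum_zero (S k) (fun i => ssum (S k) _)).
    2:{ intros i Hi. apply ssum_zero. intros i' _. destruct (Nat.eqb i i'); [rewrite Hw by lia|]; lra. }
    rewrite (ssum_zero (S k) (fun i => nu k p i * _)).
    2:{ intros i Hi. rewrite Hw by lia. lra. }
    rewrite (ssum_ext (S n) (fun i => if Nat.eqb i i then _ else 0) (fun i => (2*s) * w i)).
    2:{ intros. rewrite Nat.eqb_refl. lra. }
    rewrite ssum_scal.
    rewrite (ssum_ext (S n) (fun i => p i * _) (fun i => (2*s) * (w i * p i ^2))).
    2:{ intros. lra. }
    rewrite ssum_scal. fold M. unfold Qf. lra.
Qed.

Lemma ssum_ind m j (a : R) : ssum m (fun i => if Nat.eqb i j then a else 0) = if Nat.ltb j m then a else 0.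
Proof.
  induction m; simpl; [destruct j; simpl; lra|]. rewrite IHm.
  destruct (Nat.eqb_spec m j); destruct (Nat.ltb_spec j m); destruct (Nat.ltb_spec j (S m)); try lia; lra.
Qed.

Lemma ssum_one b : ssum b (fun _ => 1) = INR b.
Proof. induction b; simpl; auto. rewrite IHb. destruct b; simpl; lra. Qed.

Theorem proposition4p5 :
  forall (k n : nat), (1 <= k)%nat -> (k <= n - 1)%nat ->
  forall (j : nat), (k + 1 <= j)%nat -> (j <= n)%nat ->
    stable k n (fun p => Sigma k n p /\ p j > sqrt 2) /\
    stable k n (fun p => Sigma k n p /\ Rabs (p j) < sqrt 2) /\
    stable k n (fun p => Sigma k n p /\ p j < - sqrt 2) /\
    stable k n (fun p => Sigma k n p /\ sqrt (ynorm2 k n p) > sqrt (2 * INR (n - k))) /\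
    stable k n (fun p => Sigma k n p /\ sqrt (ynorm2 k n p) < sqrt (2 * INR (n - k))).
Proof.
  intros k n Hk Hkn j Hj1 Hj2.
  set (w1 := fun i => if Nat.eqb i j then 1 else 0).
  assert (Hw1 : forall i, (i <= k)%nat -> w1 i = 0).
  { intros i Hi. unfold w1. destruct (Nat.eqb_spec i j); [lia|auto]. }
  assert (Q1 : forall p, Qf w1 n p - 2 * ssum (S n) w1 = p j ^ 2 - 2).
  { intros p. unfold Qf, w1.
    rewrite (ssum_ext (S n) _ (fun i => if Nat.eqb i j then p j ^ 2 else 0)).
    2:{ intros i _. destruct (Nat.eqb_spec i j); [subst|]; lra. }
    rewrite !ssum_ind. destruct (Nat.ltb_spec j (S n)); [lra|lia]. }
  set (w2 := fun i => if Nat.ltb k i then 1 else 0).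
  assert (Hw2 : forall i, (i <= k)%nat -> w2 i = 0).
  { intros i Hi. unfold w2. destruct (Nat.ltb_spec k i); [lia|auto]. }
  assert (Q2 : forall p, Qf w2 n p - 2 * ssum (S n) w2 = ynorm2 k n p - 2 * INR (n - k)).
  { intros p. unfold Qf, ynorm2, sumrange.
    replace (S n - S k)%nat with (n - k)%nat by lia.
    replace (S n) with (S k + (n - k))%nat by lia.
    rewrite !ssum_add.
    rewrite (ssum_zero (S k) (fun i => w2 i * _)) by (intros; rewrite Hw2 by lia; lra).
    rewrite (ssum_zero (S k) w2) by (intros; apply Hw2; lia).
    rewrite (ssum_ext (n - k) (fun i => w2 (S k + i)%nat * _) (fun i => p (S k + i)%nat ^ 2)).
    2:{ intros i _. unfold w2. destruct (Nat.ltb_spec k (S k + i)); [lra|lia]. }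
    rewrite (ssum_ext (n - k) (fun i => w2 (S k + i)%nat) (fun _ => 1)).
    2:{ intros i _. unfold w2. destruct (Nat.ltb_spec k (S k + i)); [lra|lia]. }
    rewrite ssum_one. lra. }
  assert (S2 : sqrt 2 * sqrt 2 = 2) by (apply sqrt_sqrt; lra).
  assert (S2p : 0 < sqrt 2) by (apply sqrt_lt_R0; lra).
  split; [|split; [|split; [|split]]].
  - apply (generic k n w1 1); auto. intros p [_ H]. rewrite Q1. nra.
  - apply (generic k n w1 (-1)); auto. intros p [_ H]. rewrite Q1.
    rewrite <- (pow2_abs (p j)). pose proof (Rabs_pos (p j)). nra.
  - apply (generic k n w1 1); auto. intros p [_ H]. rewrite Q1. nra.
  - apply (generic k n w2 1); auto. intros p [_ H]. rewrite Q2.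
    destruct (Rle_lt_dec (ynorm2 k n p) (2 * INR (n - k))) as [H1|H1].
    + apply sqrt_le_1_alt in H1. lra.
    + lra.
  - apply (generic k n w2 (-1)); auto. intros p [_ H]. rewrite Q2.
    destruct (Rle_lt_dec (2 * INR (n - k)) (ynorm2 k n p)) as [H1|H1].
    + apply sqrt_le_1_alt in H1. lra.
    + lra.
Qed.
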